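(* Let $(I,\leq)$ and $(J,\preccurlyeq)$ be finite posets and $\mathcal P\colon J^{\mathrm{op}}\to\mathrm{Fun}(I,\mathrm{vect}_K)$ a thin functor. Then the collection $\{\mathcal P(a)\mid a\in J,\ \mathcal P(a)\neq0\}$ is independent.
   Context: $K$ is a field, $\mathrm{vect}_K$ finite-dimensional $K$-vector spaces, $\mathrm{Fun}(I,\mathrm{vect}_K)$ the category of functors $I\to\mathrm{vect}_K$ with natural transformations (hom sets $\mathrm{Nat}_I$). For $a\in J$, $K(a,-)\colon J\to\mathrm{vect}_K$ is the free functor ($K(a,b)=K$ if $a\preccurlyeq b$, else $0$, identity transitions between nonzero values). $\mathcal R M=\mathrm{Nat}_I(\mathcal P(-),M)$ defines $\mathcal R\colon\mathrm{Fun}(I,\mathrm{vect}_K)\to\mathrm{Fun}(J,\mathrm{vect}_K)$, with left adjoint $\mathcal L$ (given by $\mathcal LF=\mathrm{colim}\big(\bigoplus_{a_0\prec a_1}\mathcal P(a_1)\otimes F(a_0)\rightrightarrows\bigoplus_a\mathcal P(a)\otimes F(a)\big)$), so $\mathcal LK(a,-)\cong\mathcal P(a)$; $\eta_a\colon K(a,-)\to\mathcal R\mathcal LK(a,-)$ is the unit. $\mathcal P$ is thin if each $\eta_a$ is pointwise surjective. For a collection $\mathcal C$ of objects of an abelian category, an object is $\mathcal C$-free if it is isomorphic to a finite direct sum of elements of $\mathcal C$; $\mathcal C$ is independent if for every $\mathcal C$-free object $F$ there is a unique finitely supported function $\beta\colon\mathcal C\to\mathbb N$ with $F\cong\bigoplus_{A\in\mathcal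 C}A^{\beta(A)}$. *)

(* Defs.v *)
(* Concrete model of Fun(I, vect_K) for a finite poset I:
   a functor M : I -> vect_K is given by dimensions  rdim M i  (M(i) = K^(rdim M i))
   and matrices  rmap M i j  for i <= j, acting on ROW vectors (v |-> v *m A). *)
From HB Require Import structures.
From mathcomp Require Import all_boot all_order all_algebra.
Set Implicit Arguments. Unset Strict Implicit. Unset Printing Implicit Defensive.
Import Order.TTheory GRing.Theory.
Local Open Scope ring_scope.

Section Reps.
Variables (K : fieldType) (dI : Order.disp_t) (I : finPOrderType dI).

(* data of a functor I -> vect_K; the entries rmap i j for i not <= j are irrelevant *)
Record rep := Rep {
  rdim : I -> nat;
  rmap : forall i j : I, 'M[K]_(rdim i, rdim j)
}.

Definition is_rep (M : rep) : Prop :=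
  (forall i, rmap M i i = 1%:M) /\
  (forall i j k, (i <= j)%O -> (j <= k)%O -> rmap M i k = rmap M i j *m rmap M j k).

Definition is_nat (M N : rep) (f : forall i, 'M[K]_(rdim M i, rdim N i)) : Prop :=
  forall i j, (i <= j)%O -> rmap M i j *m f j = f i *m rmap N i j.

Definition rep_iso (M N : rep) : Prop :=
  exists (f : forall i, 'M[K]_(rdim M i, rdim N i))
         (g : forall i, 'M[K]_(rdim N i, rdim M i)),
    [/\ is_nat f, is_nat g, forall i, f i *m g i = 1%:M & forall i, g i *m f i = 1%:M].

Definition rep0 : rep := @Rep (fun _ => 0%N) (fun _ _ => 0).

Definition rep_sum (M N : rep) : rep :=
  @Rep (fun i => (rdim M i + rdim N i)%N)
       (fun i j => block_mx (rmap M i j) 0 0 (rmap N i j)).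

Definition rep_nonzero (M : rep) : bool := [exists i, (0 < rdim M i)%N].

Definition rep_pow (A : rep) (n : nat) : rep := iter n (rep_sum A) rep0.

Definition rep_free_sum (C : finType) (A : C -> rep) (beta : {ffun C -> nat}) : rep :=
  foldr (fun c acc => rep_sum (rep_pow (A c) (beta c)) acc) rep0 (enum C).

Definition is_free (C : finType) (A : C -> rep) (F : rep) : Prop :=
  exists beta : {ffun C -> nat}, rep_iso F (rep_free_sum A beta).

Definition independent (C : finType) (A : C -> rep) : Prop :=
  forall F : rep, is_rep F -> is_free A F ->
    exists! beta : {ffun C -> nat}, rep_iso F (rep_free_sum A beta).

End Reps.

Section JFunctors.
Variables (K : fieldType) (dI : Order.disp_t) (I : finPOrderType dI)
          (dJ : Order.disp_t) (J : finPOrderType dJ).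

(* data of a functor P : J^op -> Fun(I, vect_K):
   for a <= b, Pmor a b : P(b) => P(a) (component at i is Pmor a b i) *)
Record jfunctor := JFunctor {
  Pobj : J -> rep K I;
  Pmor : forall (a b : J) (i : I), 'M[K]_(rdim (Pobj b) i, rdim (Pobj a) i)
}.

Definition is_jfunctor (P : jfunctor) : Prop :=
  [/\ forall a, is_rep (Pobj P a),
      forall a b, (a <= b)%O -> is_nat (Pmor P a b),
      forall a i, Pmor P a a i = 1%:M &
      forall a b c, (a <= b)%O -> (b <= c)%O ->
        forall i, Pmor P a c i = Pmor P b c i *m Pmor P a b i].

(* Thinness, unfolded: under LK(a,-) = P(a), the unit
   eta_a(b) : K(a,b) -> (R P(a))(b) = Nat_I(P(b), P(a))
   sends lambda to lambda * P(a <= b) (domain 0 if not a <= b).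
   Pointwise surjectivity of every eta_a says: *)
Definition thin (P : jfunctor) : Prop :=
  forall (a b : J) (f : forall i, 'M[K]_(rdim (Pobj P b) i, rdim (Pobj P a) i)),
    is_nat f ->
    if (a <= b)%O then exists k : K, forall i, f i = k *: Pmor P a b i
    else forall i, f i = 0.

End JFunctors.

(* Main.v *)
Require Import Defs.
From HB Require Import structures.
From mathcomp Require Import all_boot all_order all_algebra.
From Stdlib Require Import ClassicalEpsilon.
Set Implicit Arguments. Unset Strict Implicit. Unset Printing Implicit Defensive.
Import Order.TTheory GRing.Theory.
Local Open Scope ring_scope.

Section Basis.
Variables (K : fieldType) (dI : Order.disp_t) (I : finPOrderType dI) (M : rep K I).

Definition tr (X : rep K I) := forall i, 'M[K]_(rdim M i, rdim X i).

Definition lc (X : rep K I) n (e : 'I_n -> tr X) (v : 'rV[K]_n) : tr X :=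
  fun i => \sum_(k < n) v 0 k *: e k i.

Definition basis (X : rep K I) (n : nat) : Prop :=
  exists e : 'I_n -> tr X,
    [/\ forall k, is_nat (e k),
        forall v, (forall i, lc e v i = 0) -> v = 0 &
        forall g : tr X, is_nat g -> exists v, forall i, g i = lc e v i].

Lemma indep_span_le X n m (e : 'I_n -> tr X) (d : 'I_m -> tr X) (w : 'I_n -> 'rV[K]_m) :
  (forall v, (forall i, lc e v i = 0) -> v = 0) ->
  (forall k i, e k i = lc d (w k) i) -> (n <= m)%N.
Proof.
move=> ind sp; rewrite leqNgt; apply/negP => ltmn.
pose C := \matrix_(k < n, l < m) w k 0 l.
have nf : ~~ row_free C.
  by rewrite -row_leq_rank -ltnNge (leq_ltn_trans (rank_leq_col C)).
move: nf; rewrite -kermx_eq0 => kn.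
have [r Hr] : exists r, row r (kermx C) != 0.
  apply/existsP; apply: contraR kn; rewrite negb_exists => /forallP H.
  apply/eqP/row_matrixP => r; rewrite row0; exact/eqP/negPn/H.
set v := row r (kermx C) in Hr.
have vC : v *m C = 0 by rewrite /v -row_mul mulmx_ker row0.
suff : v = 0 by move=> v0; rewrite v0 eqxx in Hr.
apply: ind => i; rewrite /lc.
under eq_bigr do rewrite sp /lc scaler_sumr.
rewrite exchange_big /=; apply: big1 => l _.
under eq_bigr do rewrite scalerA.
rewrite -scaler_suml.
have : (v *m C) 0 l = 0 by rewrite vC mxE.
rewrite mxE => H.
rewrite (eq_bigr (fun k => v 0 k * C k l)) ?H ?scale0r // => k _.
by rewrite /C mxE.
Qed.

Lemma basis_unique X n m : basis X n -> basis X m -> n = m.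
Proof.
move=> [e [ne ie se]] [d [nd id sd]].
apply/eqP; rewrite eqn_leq; apply/andP; split.
- pose w k := proj1_sig (constructive_indefinite_description _ (sd (e k) (ne k))).
  apply: (indep_span_le (w := w) ie) => k i.
  by rewrite /w; case: (constructive_indefinite_description _ _) => /= x ->.
- pose w k := proj1_sig (constructive_indefinite_description _ (se (d k) (nd k))).
  apply: (indep_span_le (w := w) id) => k i.
  by rewrite /w; case: (constructive_indefinite_description _ _) => /= x ->.
Qed.


Lemma lc_mulr X Y n (e : 'I_n -> tr X) (f : forall i, 'M[K]_(rdim X i, rdim Y i)) v i :
  lc (fun k i => e k i *m f i) v i = lc e v i *m f i.
Proof. by rewrite /lc mulmx_suml; apply: eq_bigr => k _; rewrite scalemxAl. Qed.

Lemma basis_iso (X Y : rep K I) n : rep_iso X Y -> basis X n -> basis Y n.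
Proof.
move=> [f [g [nf ng fg gf]]] [e [ne ie se]].
exists (fun k i => e k i *m f i); split.
- move=> k i j lij; rewrite mulmxA ne // -!mulmxA nf //.
- move=> v H; apply: ie => i; have := H i; rewrite lc_mulr => /(congr1 (mulmx^~ (g i))).
  by rewrite mul0mx -mulmxA fg mulmx1.
- move=> h nh.
  have nhg : is_nat (fun i => h i *m g i).
    by move=> i j lij; rewrite mulmxA nh // -!mulmxA ng.
  have [v Hv] := se _ nhg; exists v => i.
  by rewrite lc_mulr -Hv -mulmxA gf mulmx1.
Qed.

Lemma rep_iso_sym (X Y : rep K I) : rep_iso X Y -> rep_iso Y X.
Proof. by move=> [f [g [nf ng fg gf]]]; exists g, f; split. Qed.

Lemma basis0 : basis (rep0 K I) 0.
Proof.
exists (fun k i => 0); split.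
- by move=> k i j _; rewrite mulmx0 mul0mx.
- by move=> v _; apply: thinmx0.
- by move=> g _; exists 0 => i; rewrite [LHS]thinmx0 [RHS]thinmx0.
Qed.


Lemma sum_row_mx m n1 n2 p (F : 'I_p -> 'M[K]_(m,n1)) (G : 'I_p -> 'M[K]_(m,n2)) :
  \sum_(k < p) row_mx (F k) (G k) = row_mx (\sum_(k < p) F k) (\sum_(k < p) G k).
Proof.
elim/big_rec3: _ => [|k x y z _ ->]; first by rewrite row_mx0.
by rewrite add_row_mx.
Qed.

Lemma split_lshift n m (k : 'I_n) : split (lshift m k) = inl k.
Proof. by rewrite -[lshift m k]/(unsplit (inl k)) unsplitK. Qed.
Lemma split_rshift n m (k : 'I_m) : split (rshift n k) = inr k.
Proof. by rewrite -[rshift n k]/(unsplit (inr k)) unsplitK. Qed.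

Lemma basis_sum (A B : rep K I) n m :
  basis A n -> basis B m -> basis (rep_sum A B) (n + m).
Proof.
move=> [eA [natA indA spA]] [eB [natB indB spB]].
pose e (k : 'I_(n + m)) : tr (rep_sum A B) := fun i =>
  match split k with inl k1 => row_mx (eA k1 i) 0 | inr k2 => row_mx 0 (eB k2 i) end.
have lcE v i : lc e v i = row_mx (lc eA (lsubmx v) i) (lc eB (rsubmx v) i).
  rewrite /lc big_split_ord /=.
  under eq_bigr do rewrite /e split_lshift scale_row_mx scaler0.
  under [X in _ + X]eq_bigr do rewrite /e split_rshift scale_row_mx scaler0.
  rewrite !sum_row_mx.
  rewrite !big1_eq (add_row_mx (_ : 'M_(rdim M i, rdim A i))) addr0 add0r.
  by congr row_mx; apply: eq_bigr => k _; rewrite mxE.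
exists e; split.
- move=> k i j lij; rewrite /e /=; case: (split k) => k'.
  + by rewrite mul_mx_row mulmx0 mul_row_block !mulmx0 !mul0mx !addr0 natA.
  + by rewrite mul_mx_row mulmx0 mul_row_block !mulmx0 !mul0mx !add0r natB.
- move=> v H; rewrite -[v]hsubmxK.
  have H2 i := eq_row_mx (etrans (esym (lcE v i)) (etrans (H i) (esym (row_mx0 _ _ _ _)))).
  rewrite (indA _ (fun i => (H2 i).1)) (indB _ (fun i => (H2 i).2)).
  exact: row_mx0.
- move=> g ng.
  have ngl : is_nat (fun i => lsubmx (g i) : 'M_(rdim M i, rdim A i)).
    move=> i j lij; have H := ng i j lij.
    rewrite -[g j]hsubmxK -[g i]hsubmxK mul_mx_row mul_row_block !mulmx0 addr0 add0r in H.
    by case/eq_row_mx: H => [-> _].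
  have ngr : is_nat (fun i => rsubmx (g i) : 'M_(rdim M i, rdim B i)).
    move=> i j lij; have H := ng i j lij.
    rewrite -[g j]hsubmxK -[g i]hsubmxK mul_mx_row mul_row_block !mulmx0 addr0 add0r in H.
    by case/eq_row_mx: H => [_ ->].
  have [vA HA] := spA _ ngl; have [vB HB] := spB _ ngr.
  exists (row_mx vA vB) => i.
  by rewrite lcE row_mxKl row_mxKr -HA -HB hsubmxK.
Qed.


Lemma basis_eq X n m : n = m -> basis X n -> basis X m.
Proof. by move=> ->. Qed.

Lemma basis_pow (A : rep K I) t n : basis A t -> basis (rep_pow A n) (n * t).
Proof.
move=> bA; elim: n => [|n IH]; first by rewrite mul0n; exact: basis0.
rewrite /rep_pow iterS mulSn; exact: basis_sum.
Qed.

Lemma basis_free (C : finType) (A : C -> rep K I) (t : C -> nat) (beta : {ffun C -> nat}) :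
  (forall c, basis (A c) (t c)) ->
  basis (rep_free_sum A beta) (\sum_(c <- enum C) beta c * t c).
Proof.
move=> bA; rewrite /rep_free_sum; elim: (enum C) => [|c s IH].
  by rewrite big_nil; exact: basis0.
rewrite big_cons /=; apply: basis_sum => //; exact: basis_pow.
Qed.

End Basis.

Section Tri.
Variables (dJ : Order.disp_t) (J : finPOrderType dJ) (C : finType) (s : C -> J)
  (t : J -> J -> nat).
Hypotheses (sinj : injective s) (tdiag : forall c, t (s c) (s c) = 1%N)
  (tle : forall b c, t b c != 0%N -> (c <= b)%O).

Lemma tri (beta gamma : {ffun C -> nat}) :
  (forall b, \sum_(c <- enum C) beta c * t (s b) (s c) =
             \sum_(c <- enum C) gamma c * t (s b) (s c))%N -> beta = gamma.
Proof.
move=> H; apply/ffunP => c.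
pose D c := [set c' : C | (s c' < s c)%O].
suff: forall n c, (#|D c| < n)%N -> beta c = gamma c by apply; exact: ltnSn.
elim=> [//|n IH] {}c Hc.
have := H c; rewrite !big_enum /= (bigD1 c) //= [in RHS](bigD1 c) //= tdiag !muln1.
rewrite (eq_bigr (fun c' => gamma c' * t (s c) (s c'))%N); first by move/addIn.
move=> c' nc.
case E: (t (s c) (s c') == 0%N); first by rewrite (eqP E) !muln0.
have lt : (s c' < s c)%O.
  rewrite lt_neqAle tle ?E // andbT; apply: contra nc => /eqP /sinj ->; done.
rewrite IH // -ltnS; apply: leq_trans Hc; rewrite ltnS; apply: proper_card; apply/properP; split.
  apply/subsetP => x; rewrite !inE => /lt_trans; exact.
by exists c'; rewrite !inE ?lt // ltxx.
Qed.
End Tri.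

Section Thin.
Variables (K : fieldType) (dI : Order.disp_t) (I : finPOrderType dI)
          (dJ : Order.disp_t) (J : finPOrderType dJ) (P : jfunctor K I J).
Hypotheses (HP : is_jfunctor P) (HT : thin P).

Definition tt (b c : J) : nat := ((c <= b)%O && [exists i, Pmor P c b i != 0]).

Lemma basisP b c : basis (Pobj P b) (Pobj P c) (tt b c).
Proof.
case: HP => _ Hnat Hid _.
rewrite /tt; case E: (c <= b)%O; case: existsP => /= [[i0 Hi0]|Hz].
- exists (fun _ => Pmor P c b); split.
  + by move=> _; exact: Hnat.
  + move=> v H; apply/rowP => k; rewrite ord1 mxE.
    have := H i0; rewrite /lc big_ord1 => /eqP; rewrite scaler_eq0 (negbTE Hi0) orbF.
    by move/eqP.
  + move=> g ng; have := HT ng; rewrite E => -[k Hk].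
    exists (const_mx k) => i; by rewrite /lc big_ord1 mxE Hk.
- exists (fun _ _ => 0); split.
  + by move=> k; case: k.
  + by move=> v _; apply: thinmx0.
  + move=> g ng; exists 0 => i; have := HT ng; rewrite E => -[k Hk].
    rewrite /lc big_ord0 Hk.
    have -> : Pmor P c b i = 0 by case: (eqVneq (Pmor P c b i) 0) => // Hi; case: Hz; exists i.
    by rewrite scaler0.
- exists (fun _ _ => 0); split.
  + by move=> k; case: k.
  + by move=> v _; apply: thinmx0.
  + move=> g ng; exists 0 => i; have := HT ng; rewrite E => Hk.
    by rewrite /lc big_ord0 Hk.
- exists (fun _ _ => 0); split.
  + by move=> k; case: k.
  + by move=> v _; apply: thinmx0.
  + move=> g ng; exists 0 => i; have := HT ng; rewrite E => Hk.
    by rewrite /lc big_ord0 Hk.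
Qed.

End Thin.

Theorem proposition5p10 (K : fieldType) (dI : Order.disp_t) (I : finPOrderType dI)
  (dJ : Order.disp_t) (J : finPOrderType dJ) (P : jfunctor K I J) :
  is_jfunctor P -> thin P ->
  independent (fun c : {a : J | rep_nonzero (Pobj P a)} => Pobj P (sval c)).
Proof.
move=> HP HT F _ [b0 iso0]; exists b0; split => // g isog.
have key b := basis_iso (rep_iso_sym iso0) (basis_free b0 (fun c => basisP HP HT b (sval c))).
have key2 b := basis_iso (rep_iso_sym isog) (basis_free g (fun c => basisP HP HT b (sval c))).
apply: (@tri _ _ _ (fun c : {a : J | rep_nonzero (Pobj P a)} => sval c) (tt P)).
- exact: val_inj.
- move=> [a Ha] /=; rewrite /tt lexx /=; suff -> : [exists i, Pmor P a a i != 0] by []; apply/existsP.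
  case/existsP: Ha => i Hi; exists i.
  case: HP => _ _ -> _.
  apply/eqP => /matrixP /(_ (Ordinal Hi) (Ordinal Hi)); rewrite !mxE eqxx /=.
  by move/eqP; rewrite oner_eq0.
- by move=> b c; rewrite /tt; case: (c <= b)%O.
- by move=> b; apply: basis_unique (key (sval b)) (key2 (sval b)).
Qed.
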